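(* Let $G_1=(T_1,A_1)$ and $G_2=(T_2,A_2)$ be games such that $T_1,T_2,A_1,A_2$ are at most countable and both $G_1$ and $G_2$ are injective in $\mathbf{Games}_{emb}$ with respect to embeddings between finite games. If $G=(T,A)\le G_1$ is a finite game and $f\colon G\to G_2$ is a game embedding, then $f$ extends to an isomorphism $\tilde f\colon G_1\to G_2$, i.e. a bijective chronological map $\tilde f\colon T_1\to T_2$ with $\tilde f|_T=f$ and $\overline{\tilde f}(R)\in A_2\iff R\in A_1$ for all $R\in\mathrm{Run}(T_1)$.
   Context: A game tree is $T\subseteq M^{<\omega}$ (some set $M$) closed under initial segments such that every $t\in T$ has an extension $t^\frown x\in T$; $|t|$ is the length and $t\restriction k$ the initial segment of length $k$. $\mathrm{Run}(T)=\{R\in M^\omega:R\restriction n\in T\ \forall n\}$. A game is $(T,A)$ with $A\subseteq\mathrm{Run}(T)$; it is finite if $\mathrm{Run}(T)$ is finite. $(T,A)\le(T',A')$ means $T\subseteq T'$ and $A=A'\cap\mathrm{Run}(T)$. A chronological map $f\colon T_1\to T_2$ satisfies $|f(t)|=|t|$, $f(t\restriction k)=f(t)\restriction k$, and induces $\bar f$ on runs by $\bar f(R)\restriction n=f(R\restriction n)$. A game embedding $(T_1,A_1)\to(T_2,A_2)$ is an injective chronological $f$ with $\bar f(R)\in A_2\iff R\in A_1$ for all runs $R$. $\mathbf{Games}_{emb}$ is the category of games with game embeddings. A game $X$ is injective in $\mathbf{Games}_{emb}$ with respect to embeddings between finite games if for all finite games $C,D$, every game embedding $g\colon C\to D$ and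 every game embedding $f\colon C\to X$ there is a game embedding $h\colon D\to X$ with $h\circ g=f$. *)

(* Defs.v *)
From mathcomp Require Import all_boot.
Set Implicit Arguments.
Unset Strict Implicit.
Unset Printing Implicit Defensive.

(* Finite sequences M^{<omega} are [seq M]; t|k is [take k t];
   the initial segment of length n of a run R : nat -> M is [mkseq R n]. *)

Definition game_tree (M : Type) (T : seq M -> Prop) : Prop :=
  T [::] /\
  (forall t k, T t -> T (take k t)) /\
  (forall t, T t -> exists x, T (rcons t x)).

Definition Run (M : Type) (T : seq M -> Prop) (R : nat -> M) : Prop :=
  forall n, T (mkseq R n).

Definition game (M : Type) (T : seq M -> Prop) (A : (nat -> M) -> Prop) : Prop :=
  game_tree T /\ (forall R, A R -> Run T R).

Definition finite_game (M : Type) (T : seq M -> Prop) : Prop :=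
  exists (n : nat) (e : 'I_n -> nat -> M), forall R, Run T R -> exists i, R =1 e i.

Definition game_le (M : Type) (T : seq M -> Prop) (A : (nat -> M) -> Prop)
  (T' : seq M -> Prop) (A' : (nat -> M) -> Prop) : Prop :=
  (forall t, T t -> T' t) /\ (forall R, A R <-> (A' R /\ Run T R)).

(* Chronological map f : T1 -> T2 (f is a function on sequences whose values
   matter only on T1). *)
Definition chronological (M1 M2 : Type) (f : seq M1 -> seq M2)
  (T1 : seq M1 -> Prop) (T2 : seq M2 -> Prop) : Prop :=
  forall t, T1 t ->
    [/\ T2 (f t), size (f t) = size t & forall k, f (take k t) = take k (f t)].

Definition induced (M1 M2 : Type) (f : seq M1 -> seq M2)
  (R : nat -> M1) (R' : nat -> M2) : Prop :=
  forall n, mkseq R' n = f (mkseq R n).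

Definition game_embedding (M1 M2 : Type) (f : seq M1 -> seq M2)
  (T1 : seq M1 -> Prop) (A1 : (nat -> M1) -> Prop)
  (T2 : seq M2 -> Prop) (A2 : (nat -> M2) -> Prop) : Prop :=
  [/\ chronological f T1 T2,
      (forall s t, T1 s -> T1 t -> f s = f t -> s = t) &
      (forall R R', Run T1 R -> induced f R R' -> (A2 R' <-> A1 R))].

Definition injective_finite (MX : Type) (TX : seq MX -> Prop)
  (AX : (nat -> MX) -> Prop) : Prop :=
  forall (MC MD : Type) (TC : seq MC -> Prop) (AC : (nat -> MC) -> Prop)
         (TD : seq MD -> Prop) (AD : (nat -> MD) -> Prop)
         (g : seq MC -> seq MD) (f : seq MC -> seq MX),
    game TC AC -> finite_game TC -> game TD AD -> finite_game TD ->
    game_embedding g TC AC TD AD -> game_embedding f TC AC TX AX ->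
    exists h : seq MD -> seq MX,
      game_embedding h TD AD TX AX /\ (forall t, TC t -> h (g t) = f t).

Definition countable_set (X : Type) (P : X -> Prop) : Prop :=
  exists c : X -> nat, forall x y, P x -> P y -> c x = c y -> x = y.

Definition countable_runs (M : Type) (P : (nat -> M) -> Prop) : Prop :=
  exists c : (nat -> M) -> nat, forall R R', P R -> P R' -> c R = c R' -> R =1 R'.

(* Main.v *)
From Stdlib Require Import Classical ClassicalEpsilon FunctionalExtensionality.
Require Import Defs.
From mathcomp Require Import all_boot.
Set Implicit Arguments. Unset Strict Implicit. Unset Printing Implicit Defensive.

Lemma take_mkseq (M : Type) (f : nat -> M) k n : take k (mkseq f n) = mkseq f (minn k n).
Proof. by rewrite /mkseq -map_take take_iota. Qed.

Lemma take_mkseq_le (M : Type) (f : nat -> M) k n : k <= n -> take k (mkseq f n) = mkseq f k.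
Proof. by move=> h; rewrite take_mkseq (minn_idPl h). Qed.

Lemma mkseq_ext (M : Type) (f g : nat -> M) : (forall n, mkseq f n = mkseq g n) -> f =1 g.
Proof.
move=> h i; have := congr1 (nth (f i) ^~ i) (h i.+1).
by rewrite !nth_mkseq.
Qed.

Lemma mkseq_fun (M : Type) (f g : nat -> M) : (forall n, mkseq f n = mkseq g n) -> f = g.
Proof. by move=> h; apply: functional_extensionality; apply: mkseq_ext. Qed.

Lemma Run_eq (M : Type) (T : seq M -> Prop) R R' : R =1 R' -> Run T R -> Run T R'.
Proof. by move=> e h n; rewrite -(eq_mkseq e). Qed.

Lemma rcons_of (M : Type) (s u : seq M) : size s = (size u).+1 -> take (size u) s = u ->
  exists y, s = rcons u y.
Proof.
case/lastP: s => [|s' y]; first by move=> /= h; discriminate h.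
rewrite size_rcons => -[e].
rewrite -cats1 -e take_size_cat // => <-; by exists y; rewrite cats1.
Qed.

Lemma run_through (M : Type) (T : seq M -> Prop) t : game_tree T -> T t ->
  exists R, Run T R /\ mkseq R (size t) = t.
Proof.
move=> [h0 [htk hex]] Tt.
have [x0 _] := hex _ h0.
have hc : forall s, exists x, T s -> T (rcons s x).
  move=> s; case: (classic (T s)) => [Ts|nTs].
    by have [x hx] := hex _ Ts; exists x.
  by exists x0.
pose nxt s := proj1_sig (constructive_indefinite_description _ (hc s)).
have nxtP : forall s, T s -> T (rcons s (nxt s)).
  by move=> s; rewrite /nxt; case: constructive_indefinite_description.
pose p k := iter k (fun s => rcons s (nxt s)) t.
have pT : forall k, T (p k) by elim=> [|k IH] //=; apply: nxtP.
have psz : forall k, size (p k) = size t + k.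
  by elim=> [|k IH] /=; rewrite ?addn0 // size_rcons IH addnS.
have pcat : forall k j, exists ys, p (k + j) = p k ++ ys.
  move=> k; elim=> [|j [ys IH]]; first by exists [::]; rewrite addn0 cats0.
  by exists (rcons ys (nxt (p (k + j)))); rewrite addnS /= IH rcons_cat.
pose R n := nth x0 (p n.+1) n.
have key : forall n, mkseq R n = take n (p n).
  move=> n; apply: (@eq_from_nth _ x0).
    by rewrite size_mkseq size_takel // psz leq_addl.
  move=> i; rewrite size_mkseq => lt_in.
  rewrite nth_mkseq // nth_take // /R.
  have [ys e] := pcat i.+1 (n - i.+1).
  rewrite subnKC // in e; rewrite e nth_cat psz.
  by rewrite addnS ltnS leq_addl.
exists R; split.
  by move=> n; rewrite key; apply: htk.
have [ys e] := pcat 0 (size t).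
rewrite key add0n in e *; rewrite e /=.
by rewrite take_size_cat.
Qed.
Section Generic.
Variables (M1 M2 : Type) (T1 : seq M1 -> Prop) (A1 : (nat -> M1) -> Prop)
  (T2 : seq M2 -> Prop) (A2 : (nat -> M2) -> Prop).

Record stage (S1 : seq M1 -> Prop) (S2 : seq M2 -> Prop)
  (phi : seq M1 -> seq M2) (psi : seq M2 -> seq M1) : Prop := Stage {
  st_sub1 : forall t, S1 t -> T1 t;
  st_sub2 : forall u, S2 u -> T2 u;
  st_gt1 : game_tree S1;
  st_gt2 : game_tree S2;
  st_fin1 : finite_game S1;
  st_fin2 : finite_game S2;
  st_phiS : forall t, S1 t -> S2 (phi t);
  st_psiS : forall u, S2 u -> S1 (psi u);
  st_psiphi : forall t, S1 t -> psi (phi t) = t;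
  st_phipsi : forall u, S2 u -> phi (psi u) = u;
  st_chr1 : chronological phi S1 T2;
  st_chr2 : chronological psi S2 T1;
  st_A12 : forall R R', Run S1 R -> induced phi R R' -> (A2 R' <-> A1 R);
  st_A21 : forall R' R, Run S2 R' -> induced psi R' R -> (A1 R <-> A2 R')
}.

Lemma image_run (S : seq M1 -> Prop) (h : seq M1 -> seq M2) (x0 : M1) R' :
  game_tree S -> chronological h S T2 ->
  (forall s t, S s -> S t -> h s = h t -> s = t) ->
  (forall n, exists2 t, S t & h t = mkseq R' n) ->
  exists R, Run S R /\ induced h R R'.
Proof.
move=> [h0 [htk hex]] hch hinj him.
have hc : forall n, exists t, S t /\ h t = mkseq R' n.
  by move=> n; have [t ? ?] := him n; exists t.
pose tt n := proj1_sig (constructive_indefinite_description _ (hc n)).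
have ttP : forall n, S (tt n) /\ h (tt n) = mkseq R' n.
  by move=> n; rewrite /tt; case: constructive_indefinite_description.
have ttsz : forall n, size (tt n) = n.
  move=> n; have [St e] := ttP n; have [_ <- _] := hch _ St.
  by rewrite e size_mkseq.
have tttake : forall n m, n <= m -> take n (tt m) = tt n.
  move=> n m le; have [Sm em] := ttP m; have [Sn en] := ttP n.
  apply: hinj => //; first exact: htk.
  have [_ _ ->] := hch _ Sm.
  by rewrite em en take_mkseq_le.
pose R n := nth x0 (tt n.+1) n.
have key : forall n, mkseq R n = tt n.
  move=> n; apply: (@eq_from_nth _ x0); first by rewrite size_mkseq ttsz.
  move=> i; rewrite size_mkseq => lt_in; rewrite nth_mkseq // /R.
  by rewrite -(tttake i.+1 n lt_in) nth_take.
exists R; split.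
  by move=> n; rewrite key; case: (ttP n).
by move=> n; rewrite key; case: (ttP n).
Qed.

End Generic.
Section Generic2.
Variables (M1 M2 : Type) (T1 : seq M1 -> Prop) (A1 : (nat -> M1) -> Prop)
  (T2 : seq M2 -> Prop) (A2 : (nat -> M2) -> Prop).

Definition img (S : seq M1 -> Prop) (h : seq M1 -> seq M2) (u : seq M2) : Prop :=
  exists2 t, S t & h t = u.
Definition inv (S : seq M1 -> Prop) (h : seq M1 -> seq M2) (u : seq M2) : seq M1 :=
  epsilon (inhabits [::]) (fun t => S t /\ h t = u).

Lemma invP S h u : img S h u -> S (inv S h u) /\ h (inv S h u) = u.
Proof. move=> [t St e].
exact: (@epsilon_spec (seq M1) (inhabits [::]) (fun t => S t /\ h t = u) (ex_intro _ t (conj St e))). Qed.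

Lemma image_stage (S : seq M1 -> Prop) (h : seq M1 -> seq M2) :
  game_tree T2 ->
  (forall t, S t -> T1 t) -> game_tree S -> finite_game S ->
  game_embedding h S (fun R => A1 R /\ Run S R) T2 A2 ->
  stage T1 A1 T2 A2 S (img S h) h (inv S h).
Proof.
move=> gT2 sub gS finS [hch hinj hA].
have gS' := gS; move: gS' => [h0 [htk hex]].
have [x0 _] := hex _ h0.
have [y0 _] : exists y : M2, True.
  by case: gT2 => [T20 [_ e2]]; have [y _] := e2 _ T20; exists y.
have invh : forall t, S t -> inv S h (h t) = t.
  move=> t St; have [|Si ei] := @invP S h (h t); first by exists t.
  by apply: hinj.
have hnil : h [::] = [::].
  by have [_ _ e] := hch _ h0; rewrite -(take0 [::]) e take0.
have imgtake : forall u k, img S h u -> img S h (take k u).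
  move=> u k [t St <-]; exists (take k t); first exact: htk.
  by have [_ _ ->] := hch _ St.
have Aeq : forall R R', Run S R -> induced h R R' -> (A2 R' <-> A1 R).
  move=> R R' RS ind; rewrite (hA R R' RS ind); tauto.
split => //.
- by move=> u [t St <-]; case: (hch _ St).
- split; first by exists [::].
  split; first exact: imgtake.
  move=> u [t St <-]; have [x Sx] := hex _ St.
  have [_ sz tk] := hch _ Sx.
  have [y ey] : exists y, h (rcons t x) = rcons (h t) y.
    apply: rcons_of.
      by rewrite sz size_rcons; have [_ -> _] := hch _ St.
    have [_ -> _] := hch _ St.
    by rewrite -tk -cats1 take_size_cat.
  by exists y; rewrite -ey; exists (rcons t x).
- have [n [e He]] := finS.
  exists n, (fun i k => nth y0 (h (mkseq (e i) k.+1)) k).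
  move=> R' RR'.
  have [R [RS ind]] := image_run x0 gS hch hinj RR'.
  have [i Ri] := He R RS; exists i => k.
  by rewrite -(eq_mkseq Ri) -ind nth_mkseq.
- by move=> t St; exists t.
- by move=> u /invP [].
- by move=> u /invP [].
- move=> u [t St <-]; rewrite invh //; split => //; first exact: sub.
    by have [_ -> _] := hch _ St.
  move=> k; have [_ _ <-] := hch _ St.
  by rewrite invh //; apply: htk.
- move=> R' R R'S ind.
  have RS : Run S R by move=> n; rewrite ind; case: (invP (R'S n)).
  have ind' : induced h R R' by move=> n; rewrite ind; case: (invP (R'S n)).
  by rewrite (Aeq R R').
Qed.

End Generic2.
Definition extends (M1 M2 : Type) (S1 : seq M1 -> Prop) (S2 : seq M2 -> Prop) phi psi
  (S1' : seq M1 -> Prop) (S2' : seq M2 -> Prop) (phi' : seq M1 -> seq M2) (psi' : seq M2 -> seq M1) :=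
  [/\ forall t, S1 t -> S1' t, forall u, S2 u -> S2' u,
      forall t, S1 t -> phi' t = phi t & forall u, S2 u -> psi' u = psi u].

Lemma add_run_tree (M : Type) (S : seq M -> Prop) (R : nat -> M) :
  game_tree S -> game_tree (fun t => S t \/ exists n, t = mkseq R n).
Proof.
move=> [h0 [htk hex]]; split; first by left.
split.
  move=> t k [St|[n ->]]; first by left; apply: htk.
  by right; exists (minn k n); rewrite take_mkseq.
move=> t [St|[n ->]]; first by have [x ?] := hex _ St; exists x; left.
by exists (R n); right; exists n.+1; rewrite mkseqS.
Qed.

Lemma add_run_fin (M : Type) (S : seq M -> Prop) (R : nat -> M) :
  game_tree S -> finite_game S -> finite_game (fun t => S t \/ exists n, t = mkseq R n).
Proof.
move=> [h0 [htk hex]] [n [e He]].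
exists n.+1, (fun i => match @insub nat (fun k => k < n) _ (val i) with Some j => e j | None => R end).
move=> R0 RR0.
case: (classic (forall m, S (mkseq R0 m))) => [all|].
  have [i Ri] := He _ all; exists (widen_ord (leqnSn n) i).
  rewrite /= insubT /= ?ltn_ord // => k.
  by have -> : Sub (val i) k = i by apply: val_inj.
move=> nall; have [n0 nS] := not_all_ex_not _ _ nall.
exists ord_max; rewrite /= insubF ?ltnn //.
have key : forall m, n0 <= m -> mkseq R0 m = mkseq R m.
  move=> m le; case: (RR0 m) => [Sm|[k ek]].
    by case: nS; rewrite -(take_mkseq_le R0 le); apply: htk.
  have := congr1 size ek; rewrite !size_mkseq => ekm.
  by rewrite ek -ekm.
move=> i; have := congr1 (nth (R i) ^~ i) (key (maxn i.+1 n0) (leq_maxr _ _)).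
by rewrite !nth_mkseq // leq_max ltnSn.
Qed.
Lemma forth (M1 M2 : Type) (T1 : seq M1 -> Prop) (A1 : (nat -> M1) -> Prop)
  (T2 : seq M2 -> Prop) (A2 : (nat -> M2) -> Prop) S1 S2 phi psi R :
  game_tree T2 -> injective_finite T2 A2 ->
  stage T1 A1 T2 A2 S1 S2 phi psi -> Run T1 R ->
  exists S1' S2' phi' psi', [/\ stage T1 A1 T2 A2 S1' S2' phi' psi',
     extends S1 S2 phi psi S1' S2' phi' psi' & Run S1' R].
Proof.
move=> gT2 inj2 st RT.
pose S1' t := S1 t \/ exists n, t = mkseq R n.
have gS1 := st_gt1 st.
have gS1' : game_tree S1' := add_run_tree R gS1.
have fS1' : finite_game S1' := add_run_fin R gS1 (st_fin1 st).
have gid : game_embedding (fun t => t) S1 (fun R => A1 R /\ Run S1 R) S1' (fun R => A1 R /\ Run S1' R).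
  split.
  + move=> t St; split => //; by left.
  + by [].
  + move=> R0 R0' R0S ind.
    have -> : R0' = R0 by apply: mkseq_fun.
    split; move=> [a b]; split => //.
    by move=> n; left.
have gphi : game_embedding phi S1 (fun R => A1 R /\ Run S1 R) T2 A2.
  split.
  + exact: (st_chr1 st).
  + move=> s t Ss St e; by rewrite -(st_psiphi st Ss) e (st_psiphi st St).
  + move=> R0 R0' R0S ind; rewrite (st_A12 st R0S ind); tauto.
have [h [[hch hinj hA] hext]] := inj2 M1 M1 S1 (fun R => A1 R /\ Run S1 R) S1'
   (fun R => A1 R /\ Run S1' R) (fun t => t) phi
   (conj gS1 (fun _ p => proj2 p)) (st_fin1 st) (conj gS1' (fun _ p => proj2 p)) fS1'
   gid gphi.
have sub1' : forall t, S1' t -> T1 t by move=> t [/(st_sub1 st) //|[n ->]].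
have st' := image_stage gT2 sub1' gS1' fS1' (And3 hch hinj hA).
exists S1', (img S1' h), h, (inv S1' h); split => //.
- split.
  + by move=> t St; left.
  + move=> u Su; exists (psi u); first by left; apply: (st_psiS st).
    by rewrite hext ?(st_phipsi st) //; apply: (st_psiS st).
  + by move=> t St; rewrite hext.
  + move=> u Su; have Sp := st_psiS st Su.
    have [|Si ei] := @invP _ _ S1' h u.
      by exists (psi u); [left|rewrite hext // (st_phipsi st)].
    apply: hinj => //; first by left.
    by rewrite ei hext // (st_phipsi st).
- by move=> n; right; exists n.
Qed.

Lemma stage_swap (M1 M2 : Type) (T1 : seq M1 -> Prop) (A1 : (nat -> M1) -> Prop)
  (T2 : seq M2 -> Prop) (A2 : (nat -> M2) -> Prop) S1 S2 phi psi :
  stage T1 A1 T2 A2 S1 S2 phi psi -> stage T2 A2 T1 A1 S2 S1 psi phi.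
Proof. by case=> *; split. Qed.

Lemma extends_swap (M1 M2 : Type) (S1 : seq M1 -> Prop) (S2 : seq M2 -> Prop) phi psi S1' S2' phi' psi' :
  extends S1 S2 phi psi S1' S2' phi' psi' -> extends S2 S1 psi phi S2' S1' psi' phi'.
Proof. by case=> *; split. Qed.
Lemma extends_refl (M1 M2 : Type) (S1 : seq M1 -> Prop) (S2 : seq M2 -> Prop) phi psi :
  extends S1 S2 phi psi S1 S2 phi psi.
Proof. by split. Qed.

Lemma extends_trans (M1 M2 : Type) (S1 : seq M1 -> Prop) (S2 : seq M2 -> Prop) phi psi
  S1' S2' phi' psi' S1'' S2'' phi'' psi'' :
  extends S1 S2 phi psi S1' S2' phi' psi' -> extends S1' S2' phi' psi' S1'' S2'' phi'' psi'' ->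
  extends S1 S2 phi psi S1'' S2'' phi'' psi''.
Proof.
case=> a b c d [a' b' c' d']; split; auto.
- by move=> t St; rewrite c' ?c //; apply: a.
- by move=> u Su; rewrite d' ?d //; apply: b.
Qed.

Lemma ext_node (M1 M2 : Type) (T1 : seq M1 -> Prop) (A1 : (nat -> M1) -> Prop)
  (T2 : seq M2 -> Prop) (A2 : (nat -> M2) -> Prop) S1 S2 phi psi (c : seq M1 -> nat) k :
  game_tree T1 -> game_tree T2 -> injective_finite T2 A2 ->
  (forall s t, T1 s -> T1 t -> c s = c t -> s = t) ->
  stage T1 A1 T2 A2 S1 S2 phi psi ->
  exists S1' S2' phi' psi', [/\ stage T1 A1 T2 A2 S1' S2' phi' psi',
     extends S1 S2 phi psi S1' S2' phi' psi' & forall t, T1 t -> c t = k -> S1' t].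
Proof.
move=> gT1 gT2 inj2 hc st.
case: (classic (exists t, T1 t /\ c t = k)) => [[t [Tt ct]]|no].
  have [R [RT eR]] := run_through gT1 Tt.
  have [S1' [S2' [phi' [psi' [st' ex' RS]]]]] := forth gT2 inj2 st RT.
  exists S1', S2', phi', psi'; split => // t' Tt' ct'.
  have <- : t = t' by apply: hc => //; rewrite ct ct'.
  by rewrite -eR.
exists S1, S2, phi, psi; split; [done | exact: extends_refl | ].
by move=> t Tt ct; case: no; exists t.
Qed.

Lemma ext_run (M1 M2 : Type) (T1 : seq M1 -> Prop) (A1 : (nat -> M1) -> Prop)
  (T2 : seq M2 -> Prop) (A2 : (nat -> M2) -> Prop) S1 S2 phi psi (c : (nat -> M1) -> nat) k :
  game T1 A1 -> game_tree T2 -> injective_finite T2 A2 ->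
  (forall R R', A1 R -> A1 R' -> c R = c R' -> R =1 R') ->
  stage T1 A1 T2 A2 S1 S2 phi psi ->
  exists S1' S2' phi' psi', [/\ stage T1 A1 T2 A2 S1' S2' phi' psi',
     extends S1 S2 phi psi S1' S2' phi' psi' & forall R, A1 R -> c R = k -> Run S1' R].
Proof.
move=> [gT1 AT1] gT2 inj2 hc st.
case: (classic (exists R, A1 R /\ c R = k)) => [[R [AR cR]]|no].
  have [S1' [S2' [phi' [psi' [st' ex' RS]]]]] := forth gT2 inj2 st (AT1 _ AR).
  exists S1', S2', phi', psi'; split => // R' AR' cR'.
  apply: Run_eq RS; apply: hc => //; by rewrite cR cR'.
exists S1, S2, phi, psi; split; [done | exact: extends_refl | ].
by move=> R AR cR; case: no; exists R.
Qed.

Lemma ext_all (M1 M2 : Type) (T1 : seq M1 -> Prop) (A1 : (nat -> M1) -> Prop)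
  (T2 : seq M2 -> Prop) (A2 : (nat -> M2) -> Prop) S1 S2 phi psi
  (c1 : seq M1 -> nat) (c2 : seq M2 -> nat) (a1 : (nat -> M1) -> nat) (a2 : (nat -> M2) -> nat) k :
  game T1 A1 -> game T2 A2 -> injective_finite T1 A1 -> injective_finite T2 A2 ->
  (forall s t, T1 s -> T1 t -> c1 s = c1 t -> s = t) ->
  (forall s t, T2 s -> T2 t -> c2 s = c2 t -> s = t) ->
  (forall R R', A1 R -> A1 R' -> a1 R = a1 R' -> R =1 R') ->
  (forall R R', A2 R -> A2 R' -> a2 R = a2 R' -> R =1 R') ->
  stage T1 A1 T2 A2 S1 S2 phi psi ->
  exists S1' S2' phi' psi', [/\ stage T1 A1 T2 A2 S1' S2' phi' psi',
     extends S1 S2 phi psi S1' S2' phi' psi' &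
     [/\ forall t, T1 t -> c1 t = k -> S1' t, forall R, A1 R -> a1 R = k -> Run S1' R,
         forall u, T2 u -> c2 u = k -> S2' u & forall R, A2 R -> a2 R = k -> Run S2' R]].
Proof.
move=> g1 g2 inj1 inj2 hc1 hc2 ha1 ha2 st.
have gt1 := g1.1; have gt2 := g2.1.
have [Sa [Sb [pa [qa [sta exa Ha]]]]] := ext_node k gt1 gt2 inj2 hc1 st.
have [Sc [Sd [pb [qb [stb exb Hb]]]]] := ext_run k g1 gt2 inj2 ha1 sta.
have [Se [Sf [pc [qc [stc exc Hc]]]]] := ext_node k gt2 gt1 inj1 hc2 (stage_swap stb).
have [Sg [Sh [pd [qd [std exd Hd]]]]] := ext_run k g2 gt1 inj1 ha2 stc.
have exa' := extends_swap exa; have exb' := extends_swap exb.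
have exab := extends_trans exa' exb'.
have exabc := extends_trans (extends_trans exab exc) exd.
exists Sh, Sg, qd, pd; split.
- exact: stage_swap.
- exact: extends_swap.
- case: exb => b1 b2 _ _; case: exc => c1' cc2 _ _; case: exd => d1 d2 _ _.
  split.
  + by move=> t Tt ct; apply: d2; apply: cc2; apply: b1; apply: Ha.
  + by move=> R AR cR n; apply: d2; apply: cc2; apply: Hb.
  + by move=> u Tu cu; apply: d1; apply: Hc.
  + exact: Hd.
Qed.
Record State (M1 M2 : Type) := St {
  s1 : seq M1 -> Prop; s2 : seq M2 -> Prop; ph : seq M1 -> seq M2; ps : seq M2 -> seq M1 }.

Theorem mainTheorem5 (M1 M2 : Type)
  (T1 : seq M1 -> Prop) (A1 : (nat -> M1) -> Prop)
  (T2 : seq M2 -> Prop) (A2 : (nat -> M2) -> Prop) :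
  game T1 A1 -> game T2 A2 ->
  countable_set T1 -> countable_set T2 ->
  countable_runs A1 -> countable_runs A2 ->
  injective_finite T1 A1 -> injective_finite T2 A2 ->
  forall (T : seq M1 -> Prop) (A : (nat -> M1) -> Prop),
    game T A -> finite_game T -> game_le T A T1 A1 ->
  forall f : seq M1 -> seq M2, game_embedding f T A T2 A2 ->
  exists F : seq M1 -> seq M2,
    [/\ chronological F T1 T2,
        (forall s t, T1 s -> T1 t -> F s = F t -> s = t),
        (forall u, T2 u -> exists2 t, T1 t & F t = u),
        (forall t, T t -> F t = f t) &
        (forall R R', Run T1 R -> induced F R R' -> (A2 R' <-> A1 R))].
Proof.
move=> g1 g2 [c1 hc1] [c2 hc2] [a1 ha1] [a2 ha2] inj1 inj2 T A gA finT [leT leA] f [fch finj fA].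
pose stg (x : State M1 M2) := stage T1 A1 T2 A2 (s1 x) (s2 x) (ph x) (ps x).
pose ext (x y : State M1 M2) := extends (s1 x) (s2 x) (ph x) (ps x) (s1 y) (s2 y) (ph y) (ps y).
pose goal k (y : State M1 M2) :=
  [/\ forall t, T1 t -> c1 t = k -> s1 y t, forall R, A1 R -> a1 R = k -> Run (s1 y) R,
      forall u, T2 u -> c2 u = k -> s2 y u & forall R, A2 R -> a2 R = k -> Run (s2 y) R].
have step : forall k x, exists y, stg x -> [/\ stg y, ext x y & goal k y].
  move=> k x; case: (classic (stg x)) => [sx|nsx]; last by exists x.
  have [S1' [S2' [phi' [psi' [st' ex' G']]]]] :=
    ext_all k g1 g2 inj1 inj2 hc1 hc2 ha1 ha2 sx.
  by exists (St S1' S2' phi' psi').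
pose stp k x := proj1_sig (constructive_indefinite_description _ (step k x)).
have stpP : forall k x, stg x -> [/\ stg (stp k x), ext x (stp k x) & goal k (stp k x)].
  by move=> k x; rewrite /stp; case: constructive_indefinite_description.
have femb : game_embedding f T (fun R => A1 R /\ Run T R) T2 A2.
  split => // R R' RT ind; rewrite (fA R R' RT ind) (leA R); tauto.
have st0 : stg (St T (img T f) f (inv T f)).
  exact: (image_stage g2.1 leT gA.1 finT femb).
pose sq n := nat_rect (fun _ => State M1 M2) (St T (img T f) f (inv T f)) stp n.
have sqS : forall n, sq n.+1 = stp n (sq n) by [].
have stS : forall n, stg (sq n).
  by elim=> [|n IH] //; rewrite sqS; case: (stpP n _ IH).
have goalS : forall n, goal n (sq n.+1).
  by move=> n; rewrite sqS; case: (stpP n _ (stS n)).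
have extS : forall n m, n <= m -> ext (sq n) (sq m).
  move=> n m /subnKC <-; elim: (m - n) => [|d IH].
    by rewrite addn0; apply: extends_refl.
  have [_ e _] := stpP (n + d) _ (stS (n + d)).
  rewrite addnS sqS; exact: (extends_trans IH e).
pose F t := ph (sq (c1 t).+1) t.
have inS1 : forall t, T1 t -> s1 (sq (c1 t).+1) t.
  by move=> t Tt; case: (goalS (c1 t)) => H _ _ _; apply: H.
have agree : forall n t, s1 (sq n) t -> F t = ph (sq n) t.
  move=> n t Ht; have Tt := st_sub1 (stS n) Ht.
  case: (extS n (maxn n (c1 t).+1) (leq_maxl _ _)) => _ _ e1 _.
  case: (extS (c1 t).+1 (maxn n (c1 t).+1) (leq_maxr _ _)) => _ _ e2 _.
  by rewrite /F -(e2 t (inS1 t Tt)) e1.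
have up : forall n m t, n <= m -> s1 (sq n) t -> s1 (sq m) t.
  by move=> n m t le; case: (extS n m le) => a _ _ _; apply: a.
exists F; split.
- move=> t Tt; have H := inS1 t Tt.
  have [c d e] := st_chr1 (stS (c1 t).+1) H.
  split => // k; rewrite (agree _ _ (proj1 (proj2 (st_gt1 (stS _))) _ k H)); exact: e.
- move=> s t Ts Tt e.
  pose N := maxn (c1 s).+1 (c1 t).+1.
  have Hs : s1 (sq N) s := up _ _ _ (leq_maxl _ _) (inS1 s Ts).
  have Ht : s1 (sq N) t := up _ _ _ (leq_maxr _ _) (inS1 t Tt).
  rewrite (agree _ _ Hs) (agree _ _ Ht) in e.
  by rewrite -(st_psiphi (stS N) Hs) e (st_psiphi (stS N) Ht).
- move=> u Tu.
  have Hu : s2 (sq (c2 u).+1) u by case: (goalS (c2 u)) => _ _ H _; apply: H.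
  have Ht := st_psiS (stS _) Hu.
  exists (ps (sq (c2 u).+1) u); first exact: (st_sub1 (stS _) Ht).
  by rewrite (agree _ _ Ht) (st_phipsi (stS _) Hu).
- by move=> t Tt; rewrite (agree 0 t Tt).
move=> R R' RT ind.
have key : forall m, Run (s1 (sq m)) R -> (A2 R' <-> A1 R).
  move=> m Rm; apply: (st_A12 (stS m) Rm).
  by move=> n; rewrite ind (agree _ _ (Rm n)).
case: (classic (A1 R)) => [AR|nAR].
  apply: (key (a1 R).+1).
  by case: (goalS (a1 R)) => _ H _ _; apply: H.
case: (classic (A2 R')) => [AR'|nAR']; last by tauto.
pose m := (a2 R').+1.
have R'm : Run (s2 (sq m)) R' by case: (goalS (a2 R')) => _ _ _ H; apply: H.
apply: (key m) => n.
pose t := mkseq R n; have Tt : T1 t := RT n.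
pose N := maxn m (c1 t).+1.
have HtN : s1 (sq N) t := up _ _ _ (leq_maxr _ _) (inS1 t Tt).
case: (extS m N (leq_maxl _ _)) => _ _ _ e.
have : ps (sq N) (ph (sq N) t) = t := st_psiphi (stS N) HtN.
rewrite -(agree _ _ HtN) /t -ind e // => <-.
exact: (st_psiS (stS m)).
Qed.
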